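(* Let $\alpha$ be a sequence such that $M(\alpha)$ is a bounded multiplicative Hankel operator on $\ell^2(\mathbb{N})$. For $0<r<1$ let $\alpha_r=D_r\alpha$. Then $M(\alpha_r)$ is a compact operator on $\ell^2(\mathbb{N})$, $\|M(\alpha_r)\|_{\mathcal{B}(\ell^2(\mathbb{N}))}\le\|M(\alpha)\|_{\mathcal{B}(\ell^2(\mathbb{N}))}$, and $M(\alpha_r)\to M(\alpha)$ and $M(\alpha_r)^*\to M(\alpha)^*$ in the strong operator topology as $r\to1$.
   Context: For a sequence $\alpha\colon\mathbb{N}\to\mathbb{C}$, $M(\alpha)$ is defined by $\langle M(\alpha)a,b\rangle_{\ell^2(\mathbb{N})}=\sum_{n,m}a(n)\overline{b(m)}\alpha(nm)$ for finitely supported $a,b$, and is bounded if it extends to a bounded operator on $\ell^2(\mathbb{N})$. Let $p_1<p_2<\dots$ be the primes. For a sequence $a$ and $0<r<1$, $D_ra(n)=r^{\sum_{j\ge1}j\kappa_j}a(n)$ where $n=\prod_{j\ge1}p_j^{\kappa_j}$. *)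

(* Defs.v *)
From Stdlib Require Import Reals List.
From Coquelicot Require Import Coquelicot.
From mathcomp Require ssreflect ssrbool ssrnat seq prime.
Open Scope R_scope.

(* Convention: an element x of l^2(N), N = {1,2,...}, is represented by
   x : nat -> C with  x k  the coordinate at the positive integer k+1.
   The symbol alpha : nat -> C is indexed by the positive integers themselves
   (alpha 0 is irrelevant). *)

Definition Op := (nat -> C) -> (nat -> C).

Fixpoint csum (N : nat) (f : nat -> C) : C :=
  match N with
  | O => RtoC 0
  | S N' => Cplus (csum N' f) (f N')
  end.

Definition l2 (x : nat -> C) : Prop := ex_series (fun k => (Cmod (x k)) ^ 2).
Definition l2norm (x : nat -> C) : R := sqrt (Series (fun k => (Cmod (x k)) ^ 2)).

Definition finsupp (N : nat) (x : nat -> C) : Prop := forall k, (N <= k)%nat -> x k = RtoC 0.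

Definition finip (N : nat) (x y : nat -> C) : C := csum N (fun k => Cmult (x k) (Cconj (y k))).

Definition Mform (alpha : nat -> C) (N : nat) (a b : nat -> C) : C :=
  csum N (fun n => csum N (fun m =>
    Cmult (Cmult (a n) (Cconj (b m))) (alpha ((n + 1) * (m + 1))%nat))).

Definition op_bounded_by (T : Op) (K : R) : Prop :=
  forall x, l2 x -> l2norm (T x) <= K * l2norm x.

Definition bdd_linear_op (T : Op) : Prop :=
  (forall x, l2 x -> l2 (T x)) /\
  (forall x y (c : C), l2 x -> l2 y ->
     forall k, T (fun j => Cplus (x j) (Cmult c (y j))) k = Cplus (T x k) (Cmult c (T y k))) /\
  (exists K, op_bounded_by T K).

Definition extends_M (alpha : nat -> C) (T : Op) : Prop :=
  bdd_linear_op T /\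
  forall N a b, finsupp N a -> finsupp N b -> finip N (T a) b = Mform alpha N a b.

(* S is the adjoint of the bounded operator T (tested on the dense subspace
   of finitely supported sequences, which determines a bounded S) *)
Definition is_adjoint (T S : Op) : Prop :=
  bdd_linear_op S /\
  forall N a b, finsupp N a -> finsupp N b -> finip N a (S b) = finip N (T a) b.

Definition compact_op (T : Op) : Prop :=
  forall xs : nat -> (nat -> C), (forall k, l2 (xs k)) ->
    (exists B, forall k, l2norm (xs k) <= B) ->
    exists phi : nat -> nat, (forall k, (phi k < phi (S k))%nat) /\
      exists y, l2 y /\
        forall eps, 0 < eps -> exists N, forall k, (N <= k)%nat ->
          l2norm (fun j => Cminus (T (xs (phi k)) j) (y j)) < eps.

Definition SOT_conv_left1 (Tr : R -> Op) (T : Op) : Prop :=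
  forall x, l2 x -> forall eps, 0 < eps -> exists delta, 0 < delta /\
    forall r, 1 - delta < r < 1 -> l2norm (fun j => Cminus (Tr r x j) (T x j)) < eps.

Definition prime_index (p : nat) : nat := seq.count prime.prime (seq.iota 1 p).
(* sum_j j * kappa_j  where n = prod_j p_j^kappa_j *)
Definition dweight (n : nat) : nat :=
  fold_right (fun p acc => (prime_index p * prime.logn p n + acc)%nat) 0%nat (prime.primes n).

Definition Dr (r : R) (a : nat -> C) : nat -> C :=
  fun n => Cmult (RtoC (r ^ dweight n)) (a n).

(* Main.v *)
Require Import Defs.
From Stdlib Require Import Reals.
From Coquelicot Require Import Coquelicot.
From Stdlib Require Import Lra Lia FunctionalExtensionality ClassicalEpsilon Rtopology.
From mathcomp Require ssreflect ssrfun ssrbool eqtype ssrnat seq prime bigop div.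
Open Scope R_scope.


Module NT.
Import ssreflect ssrfun ssrbool eqtype ssrnat seq prime bigop div.
Local Open Scope nat_scope.

Lemma dw_sum n : dweight n = \sum_(p <- primes n) prime_index p * logn p n.
Proof. rewrite /dweight. elim: (primes n) => [|p s IH]; by rewrite ?big_nil ?big_cons //= IH. Qed.

Lemma sum_primes_iota n B (F : nat -> nat) : 0 < n -> n < B ->
  \sum_(p <- primes n) F p * logn p n = \sum_(p <- iota 0 B) F p * logn p n.
Proof.
move=> n0 nB.
have -> : \sum_(p <- iota 0 B) F p * logn p n = \sum_(p <- iota 0 B | p \in primes n) F p * logn p n.
  rewrite [RHS]big_mkcond /=; apply: eq_bigr => p _.
  case: ifP => // Hp. have : ~~ (0 < logn p n) by rewrite logn_gt0 Hp.
  by rewrite lt0n negbK => /eqP ->; rewrite muln0.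
rewrite -[in RHS]big_filter; apply: perm_big; apply: uniq_perm.
- exact: primes_uniq.
- by apply: filter_uniq; apply: iota_uniq.
move=> p; rewrite mem_filter mem_iota add0n /=.
case Hp: (p \in primes n) => //=.
move: Hp; rewrite mem_primes => /and3P [_ _ Hd].
by rewrite (leq_ltn_trans (dvdn_leq n0 Hd) nB).
Qed.

Lemma dweight_mul n m : 0 < n -> 0 < m -> dweight (n * m) = dweight n + dweight m.
Proof.
move=> n0 m0.
have nm0 : 0 < n * m by rewrite muln_gt0 n0 m0.
rewrite !dw_sum (sum_primes_iota _ (n * m).+1) // (sum_primes_iota n (n * m).+1) //;
  last by rewrite ltnS leq_pmulr.
rewrite (sum_primes_iota m (n * m).+1) //; last by rewrite ltnS leq_pmull.
rewrite -big_split /=; apply: eq_bigr => p _.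
by rewrite lognM // mulnDr.
Qed.

Lemma idx_split p q : p <= q -> prime_index q = prime_index p + count prime (iota p.+1 (q - p)).
Proof.
move=> pq; rewrite /prime_index -[in LHS](subnKC pq) iotaD count_cat add1n; reflexivity.
Qed.

Lemma idx_lt p q : prime q -> p < q -> prime_index p < prime_index q.
Proof.
move=> Hq pq; rewrite (@idx_split p q (ltnW pq)) -[X in X < _](addn0 (prime_index p)) ltn_add2l.
rewrite -has_count; apply/hasP; exists q; last exact: Hq.
rewrite mem_iota pq /= addSn subnKC; [exact: ltnSn | exact: ltnW].
Qed.

Lemma idx_mono p q : p <= q -> prime_index p <= prime_index q.
Proof. move=> pq; rewrite (@idx_split p q pq); exact: leq_addr. Qed.

Lemma idx_ge1 p : prime p -> 0 < prime_index p.
Proof.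
move=> Hp; exact: (@idx_lt 0 p Hp (prime_gt0 Hp)).
Qed.

Lemma many_primes W : exists P, W < prime_index P.
Proof.
elim: W => [|W [P HP]]; first by exists 3; apply: (@idx_ge1 3).
case: (prime_above P) => q Pq Hq; exists q.
exact: (leq_ltn_trans HP (@idx_lt P q Hq Pq)).
Qed.

Lemma prod_le_pow (s : seq nat) (F : nat -> nat) c :
  (forall i, i \in s -> F i <= c) -> \prod_(i <- s) F i <= c ^ size s.
Proof.
elim: s => [|a s IH] H; first by rewrite big_nil.
rewrite big_cons /= expnS; apply: leq_mul.
  by apply: H; rewrite inE eqxx.
by apply: IH => i Hi; apply: H; rewrite inE Hi orbT.
Qed.

Lemma term_le n p : p \in primes n -> prime_index p * logn p n <= dweight n.
Proof.
move=> Hp; rewrite dw_sum (bigD1_seq p Hp (primes_uniq n)) /=; exact: leq_addr.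
Qed.

Lemma dweight_big W : exists M, forall n, M <= n -> W < dweight n.
Proof.
case: (many_primes W) => P HP.
have P0 : 0 < P.
  case: P HP => //.
exists ((P ^ W) ^ P).+1 => n Hn.
rewrite ltnNge; apply/negP => Hw.
have n0 : 0 < n by apply: leq_trans Hn.
have Hb : forall p, p \in primes n -> p < P /\ logn p n <= W.
  move=> p Hp.
  have Hpr : prime p by move: Hp; rewrite mem_primes => /andP [].
  have Hl : 0 < logn p n by rewrite logn_gt0.
  have Ht := leq_trans (@term_le n p Hp) Hw.
  split.
    rewrite ltnNge; apply/negP => Pp.
    have := leq_trans (@idx_mono P p Pp) (leq_trans (leq_pmulr _ Hl) Ht).
    by rewrite leqNgt HP.
  apply: leq_trans Ht; apply: leq_pmull; exact: idx_ge1.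
have Hn2 : n <= (P ^ W) ^ P.
  rewrite [X in X <= _](prod_prime_decomp n0) prime_decompE big_map /=.
  apply: leq_trans (@prod_le_pow (primes n) (fun p => p ^ logn p n) (P ^ W) _) _.
    move=> p Hp; case: (Hb p Hp) => H1 H2.
    apply: leq_trans (leq_pexp2l P0 H2).
    elim: (logn p n) => [|k IH]; first by [].
    by rewrite !expnS leq_mul // ltnW.
  rewrite leq_pexp2l //; first by rewrite expn_gt0 P0.
  have -> : P = size (iota 0 P) by rewrite size_iota.
  apply: uniq_leq_size; first exact: primes_uniq.
  move=> p Hp; rewrite mem_iota add0n; case: (Hb p Hp) => -> _; by [].
by move: Hn; rewrite ltnNge Hn2.
Qed.

Lemma dweight_big' W : exists M, forall n, (M <= n)%coq_nat -> (W < dweight n)%coq_nat.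
Proof.
case: (dweight_big W) => M HM; exists M => n /leP Hn; apply/ltP; exact: HM.
Qed.

End NT.


Fixpoint rsum (N : nat) (f : nat -> R) : R :=
  match N with O => 0 | S N' => rsum N' f + f N' end.

Lemma rsum_ext N f g : (forall k, (k < N)%nat -> f k = g k) -> rsum N f = rsum N g.
Proof. induction N; simpl; intros H; [reflexivity|]. rewrite IHN by (intros; apply H; lia). rewrite H by lia. reflexivity. Qed.

Lemma rsum_le N f g : (forall k, (k < N)%nat -> f k <= g k) -> rsum N f <= rsum N g.
Proof. induction N; simpl; intros H; [lra|]. assert (rsum N f <= rsum N g) by (apply IHN; intros; apply H; lia). specialize (H N ltac:(lia)). lra. Qed.

Lemma rsum_plus N f g : rsum N (fun k => f k + g k) = rsum N f + rsum N g.
Proof. induction N; simpl; [lra|]. rewrite IHN. lra. Qed.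

Lemma rsum_scal N c f : rsum N (fun k => c * f k) = c * rsum N f.
Proof. induction N; simpl; [lra|]. rewrite IHN. lra. Qed.

Lemma rsum_nonneg N f : (forall k, 0 <= f k) -> 0 <= rsum N f.
Proof. intros H; induction N; simpl; [lra|]. specialize (H N). lra. Qed.

Lemma rsum_mono N M f : (forall k, 0 <= f k) -> (N <= M)%nat -> rsum N f <= rsum M f.
Proof. intros H HNM. induction HNM; [lra|]. simpl. specialize (H m). lra. Qed.

Lemma rsum_term N f k : (forall k, 0 <= f k) -> (k < N)%nat -> f k <= rsum N f.
Proof. intros H Hk. apply Rle_trans with (rsum (S k) f).
 - simpl. pose proof (rsum_nonneg k f H). lra.
 - apply rsum_mono; auto. Qed.

Lemma rsum_trunc N M f : rsum N (fun k => if (k <? M)%nat then f k else 0) = rsum (Nat.min N M) f.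
Proof. induction N; [reflexivity|]. cbn [rsum]. rewrite IHN.
 destruct (Nat.ltb_spec N M).
 - replace (Nat.min (S N) M) with (S (Nat.min N M)) by lia. cbn [rsum]. replace (Nat.min N M) with N by lia. reflexivity.
 - replace (Nat.min (S N) M) with M by lia. replace (Nat.min N M) with M by lia. lra. Qed.

Lemma rsum_split N M f : rsum N f = rsum N (fun k => if (k <? M)%nat then f k else 0) + rsum N (fun k => if (k <? M)%nat then 0 else f k).
Proof. rewrite <- rsum_plus. apply rsum_ext. intros k _. destruct (k <? M)%nat; lra. Qed.

Lemma rsum_sumf N f : rsum (S N) f = sum_f_R0 f N.
Proof. induction N; simpl; [lra|]. simpl in IHN. rewrite IHN. reflexivity. Qed.

Lemma sumf_growing a : (forall k, 0 <= a k) -> Un_growing (sum_f_R0 a).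
Proof. intros H n. simpl. specialize (H (S n)). lra. Qed.

Lemma PS1 a N : (forall k, 0 <= a k) -> ex_series a -> rsum N a <= Series a.
Proof.
 intros H Hex. pose proof (Series_correct a Hex) as Hs.
 apply is_series_Reals in Hs.
 apply Rle_trans with (rsum (S N) a). { simpl. specialize (H N). lra. }
 rewrite rsum_sumf. apply growing_ineq; [apply sumf_growing; auto | exact Hs].
Qed.

Lemma PS2 a A : (forall k, 0 <= a k) -> (forall N, rsum N a <= A) -> ex_series a /\ Series a <= A.
Proof.
 intros H HA.
 destruct (growing_cv (sum_f_R0 a)) as [l Hl].
 - apply sumf_growing; auto.
 - exists A. intros x [i ->]. rewrite <- rsum_sumf. apply HA.
 - assert (Hs : is_series a l) by (apply is_series_Reals; exact Hl).
   split. { exists l; exact Hs. }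
   rewrite (is_series_unique a l Hs).
   destruct (Rle_or_lt l A) as [|Hlt]; [assumption|exfalso].
   destruct (Hl (l - A)) as [N HN]; [lra|].
   specialize (HN N (le_n N)). unfold R_dist in HN.
   specialize (HA (S N)). rewrite rsum_sumf in HA.
   apply Rabs_def2 in HN. lra.
Qed.

Lemma PS_lim a : ex_series a -> forall eps, 0 < eps -> exists N0, forall N, (N0 <= N)%nat -> Series a - rsum N a < eps.
Proof.
 intros Hex eps Heps. pose proof (Series_correct a Hex) as Hs. apply is_series_Reals in Hs.
 destruct (Hs eps Heps) as [N0 HN]. exists (S N0). intros N HN0.
 destruct N as [|N]; [lia|]. rewrite rsum_sumf. specialize (HN N ltac:(lia)).
 unfold R_dist in HN. apply Rabs_def2 in HN. lra.
Qed.

Lemma Series_nonneg' a : (forall k, 0 <= a k) -> ex_series a -> 0 <= Series a.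
Proof. intros H Hex. apply Rle_trans with (rsum 0 a); [simpl; lra| apply PS1; auto]. Qed.

Lemma series_cmp2 a b c al be : (forall k, 0 <= a k) -> (forall k, 0 <= b k) -> (forall k, 0 <= c k) ->
  0 <= al -> 0 <= be ->
  (forall k, a k <= al * b k + be * c k) -> ex_series b -> ex_series c ->
  ex_series a /\ Series a <= al * Series b + be * Series c.
Proof.
 intros Ha Hb Hc Hal Hbe Hle Exb Exc. apply PS2; auto. intros N.
 apply Rle_trans with (rsum N (fun k => al * b k + be * c k)).
 - apply rsum_le. intros; auto.
 - rewrite rsum_plus, !rsum_scal.
   pose proof (PS1 b N Hb Exb). pose proof (PS1 c N Hc Exc).
   apply Rplus_le_compat; apply Rmult_le_compat_l; auto.
Qed.

Lemma series_cmp a b : (forall k, 0 <= a k) -> (forall k, a k <= b k) -> ex_series b ->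
  ex_series a /\ Series a <= Series b.
Proof.
 intros Ha Hle Exb.
 assert (Hb : forall k, 0 <= b k) by (intros k; specialize (Ha k); specialize (Hle k); lra).
 destruct (series_cmp2 a b b 1 0 Ha Hb Hb ltac:(lra) ltac:(lra)) as [H1 H2]; auto.
 - intros k. specialize (Hle k). specialize (Hb k). lra.
 - split; auto. lra.
Qed.

Definition tailf (N : nat) (a : nat -> R) : nat -> R := fun k => if (k <? N)%nat then 0 else a k.
Definition headf (N : nat) (a : nat -> R) : nat -> R := fun k => if (k <? N)%nat then a k else 0.

Lemma tail_small a : (forall k, 0 <= a k) -> ex_series a -> forall eps, 0 < eps ->
  exists N, ex_series (tailf N a) /\ Series (tailf N a) <= eps.
Proof.
 intros Ha Hex eps Heps. destruct (PS_lim a Hex eps Heps) as [N HN]. exists N.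
 assert (Ht : forall k, 0 <= tailf N a k) by (intros k; unfold tailf; destruct (k <? N)%nat; auto; lra).
 apply PS2; auto. intros M.
 pose proof (rsum_split M N a) as Hsp. fold (tailf N a) in Hsp. rewrite rsum_trunc in Hsp.
 destruct (Nat.le_gt_cases N M).
 - replace (Nat.min M N) with N in Hsp by lia. pose proof (PS1 a M Ha Hex). specialize (HN N (le_n N)). lra.
 - replace (rsum M (tailf N a)) with 0. lra.
   transitivity (0 * rsum M (fun _ => 0)); [lra|]. rewrite <- rsum_scal. apply rsum_ext. intros k Hk. unfold tailf.
   destruct (Nat.ltb_spec k N); lia || lra.
Qed.


Definition sq (x : nat -> C) : nat -> R := fun k => Cmod (x k) ^ 2.
Lemma sq_nonneg x k : 0 <= sq x k.
Proof. unfold sq. apply pow_le, Cmod_ge_0. Qed.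
Global Hint Resolve sq_nonneg : core.

Lemma sqrt_le_from A B K : 0 <= B -> 0 <= K -> A <= K ^ 2 * B -> sqrt A <= K * sqrt B.
Proof. intros HB HK H. rewrite <- (sqrt_pow2 K HK). rewrite <- sqrt_mult by (try apply pow_le; auto).
 apply sqrt_le_1_alt. exact H. Qed.

Lemma sq_from_sqrt A B K : 0 <= A -> 0 <= B -> 0 <= K -> sqrt A <= K * sqrt B -> A <= K ^ 2 * B.
Proof. intros HA HB HK H. pose proof (sqrt_sqrt A HA). pose proof (sqrt_sqrt B HB).
 pose proof (sqrt_positivity A HA). pose proof (sqrt_positivity B HB).
 assert (sqrt A * sqrt A <= (K * sqrt B) * (K * sqrt B)) by (apply Rmult_le_compat; auto).
 nra. Qed.

Lemma le_sqrt_of_sq a B : 0 <= a -> a ^ 2 <= B -> a <= sqrt B.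
Proof. intros Ha H. rewrite <- (sqrt_pow2 a Ha). apply sqrt_le_1_alt. exact H. Qed.

Lemma sqrt_lt_of a eps : 0 < eps -> a < eps ^ 2 -> sqrt a < eps.
Proof. intros He H. destruct (Rle_or_lt a 0) as [Ha|Ha].
 - rewrite sqrt_neg_0 by lra. exact He.
 - rewrite <- (sqrt_pow2 eps) by lra. apply sqrt_lt_1_alt. lra. Qed.

Lemma l2_Series_nonneg x : l2 x -> 0 <= Series (sq x).
Proof. intros H. apply Series_nonneg'; auto. Qed.

Lemma coord_le x k : l2 x -> Cmod (x k) <= l2norm x.
Proof. intros H. unfold l2norm. apply le_sqrt_of_sq. apply Cmod_ge_0.
 apply Rle_trans with (rsum (S k) (sq x)).
 - apply (rsum_term (S k) (sq x) k). intros; apply sq_nonneg. lia.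
 - apply PS1. intros; apply sq_nonneg. exact H. Qed.

Lemma Cmod_sq_add a b : Cmod (a + b) ^ 2 <= 2 * Cmod a ^ 2 + 2 * Cmod b ^ 2.
Proof. pose proof (Cmod_triangle a b). pose proof (Cmod_ge_0 (a+b)). pose proof (Cmod_ge_0 a). pose proof (Cmod_ge_0 b).
 assert (Cmod (a + b) ^ 2 <= (Cmod a + Cmod b) ^ 2) by (apply pow_incr; lra).
 pose proof (pow2_ge_0 (Cmod a - Cmod b)). nra. Qed.

Lemma bdd_pos S : bdd_linear_op S -> exists K, 0 <= K /\ op_bounded_by S K.
Proof. intros [_ [_ [K HK]]]. exists (Rmax K 0). split; [apply Rmax_r|].
 intros x Hx. specialize (HK x Hx). apply Rle_trans with (K * l2norm x); auto.
 apply Rmult_le_compat_r; [apply sqrt_pos|apply Rmax_l]. Qed.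

Lemma op_sq S K x : op_bounded_by S K -> 0 <= K -> l2 x -> l2 (S x) ->
  Series (sq (S x)) <= K ^ 2 * Series (sq x).
Proof. intros HS HK Hx HSx. apply sq_from_sqrt; auto using l2_Series_nonneg. apply HS, Hx. Qed.

Definition dd (r : R) (k : nat) : R := r ^ dweight (S k).
Definition Dm (r : R) (x : nat -> C) : nat -> C := fun k => Cmult (RtoC (dd r k)) (x k).
Definition DSD (r : R) (S : Op) : Op := fun x => Dm r (S (Dm r x)).

Lemma dd_bounds r k : 0 < r < 1 -> 0 <= dd r k <= 1.
Proof. intros Hr. unfold dd. split. apply pow_le; lra.
 rewrite <- (pow1 (dweight (S k))). apply pow_incr. lra. Qed.

Lemma Cmod_Dm r x k : 0 < r < 1 -> Cmod (Dm r x k) = dd r k * Cmod (x k).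
Proof. intros Hr. unfold Dm. rewrite Cmod_mult, Cmod_R, Rabs_pos_eq; [reflexivity|]. apply dd_bounds; auto. Qed.

Lemma sq_Dm r x k : 0 < r < 1 -> sq (Dm r x) k = dd r k ^ 2 * sq x k.
Proof. intros Hr. unfold sq. rewrite Cmod_Dm by auto. ring. Qed.

Lemma sq_Dm_le r x k : 0 < r < 1 -> sq (Dm r x) k <= sq x k.
Proof. intros Hr. rewrite sq_Dm by auto. pose proof (dd_bounds r k Hr). pose proof (sq_nonneg x k).
 assert (dd r k ^ 2 <= 1) by nra. nra. Qed.

Lemma Dm_l2 r x : 0 < r < 1 -> l2 x -> l2 (Dm r x) /\ Series (sq (Dm r x)) <= Series (sq x).
Proof. intros Hr Hx. apply (series_cmp (sq (Dm r x)) (sq x)); auto. intros k; apply sq_Dm_le; auto. Qed.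

Lemma l2norm_Dm r x : 0 < r < 1 -> l2 x -> l2norm (Dm r x) <= l2norm x.
Proof. intros Hr Hx. destruct (Dm_l2 r x Hr Hx). unfold l2norm. apply sqrt_le_1_alt. auto. Qed.

Lemma Dm_lin r x y c : Dm r (fun j => Cplus (x j) (Cmult c (y j))) = (fun j => Cplus (Dm r x j) (Cmult c (Dm r y j))).
Proof. apply functional_extensionality. intros j. unfold Dm. ring. Qed.

Lemma DSD_bound r S K : 0 < r < 1 -> bdd_linear_op S -> op_bounded_by S K -> 0 <= K -> op_bounded_by (DSD r S) K.
Proof. intros Hr [HS _] HK HK0 x Hx. unfold DSD.
 destruct (Dm_l2 r x Hr Hx) as [HDx _].
 apply Rle_trans with (l2norm (S (Dm r x))). apply l2norm_Dm; auto.
 apply Rle_trans with (K * l2norm (Dm r x)). apply HK; auto.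
 apply Rmult_le_compat_l; auto. apply l2norm_Dm; auto. Qed.

Lemma DSD_bdd r S : 0 < r < 1 -> bdd_linear_op S -> bdd_linear_op (DSD r S).
Proof. intros Hr HS. pose proof HS as [Hl2 [Hlin _]]. split; [|split].
 - intros x Hx. unfold DSD. apply Dm_l2; auto. apply Hl2. apply Dm_l2; auto.
 - intros x y c Hx Hy k. unfold DSD. rewrite Dm_lin.
   change (Dm r (S (fun j => (Dm r x j + c * Dm r y j)%C)) k) with (RtoC (dd r k) * S (fun j => (Dm r x j + c * Dm r y j)%C) k)%C.
   rewrite Hlin by (apply Dm_l2; auto).
   change (Dm r (S (Dm r x)) k) with (RtoC (dd r k) * S (Dm r x) k)%C.
   change (Dm r (S (Dm r y)) k) with (RtoC (dd r k) * S (Dm r y) k)%C. ring.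
 - destruct (bdd_pos S HS) as [K [HK0 HK]]. exists K. apply DSD_bound; auto. Qed.


Lemma dweight_mulS n m : dweight (S n * S m) = (dweight (S n) + dweight (S m))%nat.
Proof. exact (NT.dweight_mul (S n) (S m) eq_refl eq_refl). Qed.

Lemma csum_ext N f g : (forall k, (k < N)%nat -> f k = g k) -> csum N f = csum N g.
Proof. induction N; simpl; intros H; [reflexivity|]. rewrite IHN by (intros; apply H; lia). rewrite H by lia. reflexivity. Qed.

Lemma csum_zero N f : (forall k, (k < N)%nat -> f k = RtoC 0) -> csum N f = RtoC 0.
Proof. induction N; simpl; intros H; [reflexivity|]. rewrite IHN by (intros; apply H; lia). rewrite H by lia. ring. Qed.

Lemma csum_delta N k g : (k < N)%nat -> csum N (fun j => if Nat.eqb j k then g j else RtoC 0) = g k.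
Proof. induction N; intros Hk; [lia|]. simpl.
 destruct (Nat.eq_dec k N) as [->|Hne].
 - rewrite csum_zero. rewrite Nat.eqb_refl. ring.
   intros j Hj. destruct (Nat.eqb_spec j N); [lia|reflexivity].
 - rewrite IHN by lia. destruct (Nat.eqb_spec N k); [lia|]. ring. Qed.

Lemma Cconj_R r : Cconj (RtoC r) = RtoC r.
Proof. unfold Cconj, RtoC. simpl. f_equal. ring. Qed.

Definition ek (k : nat) : nat -> C := fun j => if Nat.eqb j k then RtoC 1 else RtoC 0.

Lemma finsupp_mono N M a : finsupp N a -> (N <= M)%nat -> finsupp M a.
Proof. intros H HNM k Hk. apply H. lia. Qed.

Lemma finsupp_ek k N : (k < N)%nat -> finsupp N (ek k).
Proof. intros Hk j Hj. unfold ek. destruct (Nat.eqb_spec j k); [lia|reflexivity]. Qed.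

Lemma finip_ek_r N k z : (k < N)%nat -> finip N z (ek k) = z k.
Proof. intros Hk. unfold finip. rewrite <- (csum_delta N k z Hk). apply csum_ext. intros j _.
 unfold ek. destruct (Nat.eqb j k); rewrite Cconj_R; ring. Qed.

Lemma finip_ek_l N k z : (k < N)%nat -> finip N (ek k) z = Cconj (z k).
Proof. intros Hk. unfold finip. rewrite <- (csum_delta N k (fun j => Cconj (z j)) Hk). apply csum_ext. intros j _.
 unfold ek. destruct (Nat.eqb j k); ring. Qed.

Lemma uniq1 (S1 S2 : Op) : (forall N a b, finsupp N a -> finsupp N b -> finip N (S1 a) b = finip N (S2 a) b) ->
  forall N a, finsupp N a -> forall k, S1 a k = S2 a k.
Proof. intros H N a Ha k.
 rewrite <- (finip_ek_r (Nat.max N (S k)) k (S1 a)) by lia.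
 rewrite <- (finip_ek_r (Nat.max N (S k)) k (S2 a)) by lia.
 apply H. apply (finsupp_mono N); auto; lia. apply finsupp_ek; lia. Qed.

Lemma uniq2 (S1 S2 : Op) : (forall N a b, finsupp N a -> finsupp N b -> finip N a (S1 b) = finip N a (S2 b)) ->
  forall N b, finsupp N b -> forall k, S1 b k = S2 b k.
Proof. intros H N b Hb k.
 rewrite <- (Cconj_conj (S1 b k)), <- (Cconj_conj (S2 b k)). f_equal.
 rewrite <- (finip_ek_l (Nat.max N (S k)) k (S1 b)) by lia.
 rewrite <- (finip_ek_l (Nat.max N (S k)) k (S2 b)) by lia.
 apply H. apply finsupp_ek; lia. apply (finsupp_mono N); auto; lia. Qed.

Lemma rsum_zero N f : (forall k, (k < N)%nat -> f k = 0) -> rsum N f = 0.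
Proof. induction N; simpl; intros H; [reflexivity|]. rewrite IHN by (intros; apply H; lia). rewrite H by lia. ring. Qed.

Lemma finsupp_l2 N x : finsupp N x -> l2 x.
Proof. intros H. apply (PS2 (sq x) (rsum N (sq x))); auto. intros M.
 rewrite (rsum_split M N). rewrite rsum_trunc. rewrite (rsum_zero M (fun k => if (k <? N)%nat then 0 else sq x k)).
 - assert (rsum (Nat.min M N) (sq x) <= rsum N (sq x)) by (apply rsum_mono; auto; lia). lra.
 - intros k _. destruct (Nat.ltb_spec k N); [reflexivity|]. unfold sq. rewrite H by lia. rewrite Cmod_0. ring.
Qed.

Lemma finsupp_Dm N r a : finsupp N a -> finsupp N (Dm r a).
Proof. intros H k Hk. unfold Dm. rewrite H by auto. ring. Qed.

Lemma finip_D N r z b : finip N (Dm r z) b = finip N z (Dm r b).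
Proof. unfold finip, Dm. apply csum_ext. intros k _. rewrite Cmult_conj, Cconj_R. ring. Qed.

Lemma Mform_D r alpha N a b : Mform (Dr r alpha) N a b = Mform alpha N (Dm r a) (Dm r b).
Proof. unfold Mform. apply csum_ext. intros n _. apply csum_ext. intros m _.
 unfold Dr, Dm, dd. rewrite Cmult_conj, Cconj_R.
 replace ((n + 1) * (m + 1))%nat with (S n * S m)%nat by lia.
 rewrite dweight_mulS, pow_add, RtoC_mult. ring. Qed.

(* DSD extends M(alpha_r) *)
Lemma DSD_finip r S N a b : finip N (DSD r S a) b = finip N (S (Dm r a)) (Dm r b).
Proof. unfold DSD. apply finip_D. Qed.

Lemma ext_l2 (S1 S2 : Op) : bdd_linear_op S1 -> bdd_linear_op S2 ->
  (forall N a, finsupp N a -> forall k, S1 a k = S2 a k) ->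
  forall x, l2 x -> forall k, S1 x k = S2 x k.
Proof.
 intros HS1 HS2 Hf x Hx k.
 destruct (bdd_pos S1 HS1) as [K1 [HK1 HB1]]. destruct (bdd_pos S2 HS2) as [K2 [HK2 HB2]].
 destruct HS1 as [Hl1 [Hlin1 _]]. destruct HS2 as [Hl2 [Hlin2 _]].
 enough (Hz : (S1 x k - S2 x k)%C = RtoC 0) by (replace (S1 x k) with ((S1 x k - S2 x k) + S2 x k)%C by ring; rewrite Hz; ring).
 apply Cmod_eq_0.
 apply Rle_antisym; [|apply Cmod_ge_0].
 apply Rnot_lt_le. intros Hpos.
 set (eps := Cmod (S1 x k - S2 x k)) in *.
 set (eta := (eps / (2 * (K1 + K2 + 1))) ^ 2).
 assert (Heta : 0 < eta) by (unfold eta; apply pow_lt; apply Rdiv_lt_0_compat; lra).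
 destruct (tail_small (sq x) (fun k => sq_nonneg x k) Hx eta Heta) as [N [Ht1 Ht2]].
 set (xN := fun j => if (j <? N)%nat then x j else RtoC 0).
 set (t := fun j => if (j <? N)%nat then RtoC 0 else x j).
 assert (HxN : finsupp N xN) by (intros j Hj; unfold xN; destruct (Nat.ltb_spec j N); [lia|reflexivity]).
 assert (Hsqt : sq t = tailf N (sq x)).
 { apply functional_extensionality; intros j. unfold sq, t, tailf. destruct (j <? N)%nat; [rewrite Cmod_0; ring|reflexivity]. }
 assert (Htl2 : l2 t) by (unfold l2; fold (sq t); rewrite Hsqt; exact Ht1).
 assert (Hxe : x = fun j => Cplus (xN j) (Cmult (RtoC 1) (t j))).
 { apply functional_extensionality; intros j. unfold xN, t. destruct (j <? N)%nat; ring. }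
 assert (HxNl2 : l2 xN) by (apply (finsupp_l2 N); auto).
 assert (E1 : S1 x k = (S1 xN k + S1 t k)%C).
 { rewrite Hxe at 1. rewrite Hlin1 by auto. ring. }
 assert (E2 : S2 x k = (S2 xN k + S2 t k)%C).
 { rewrite Hxe at 1. rewrite Hlin2 by auto. ring. }
 assert (Hnt : l2norm t <= sqrt eta).
 { unfold l2norm. apply sqrt_le_1_alt. fold (sq t). rewrite Hsqt. exact Ht2. }
 assert (Hse : sqrt eta = eps / (2 * (K1 + K2 + 1))).
 { unfold eta. apply sqrt_pow2. apply Rlt_le, Rdiv_lt_0_compat; lra. }
 assert (B1 : Cmod (S1 t k) <= K1 * sqrt eta).
 { apply Rle_trans with (l2norm (S1 t)). apply coord_le; auto.
   apply Rle_trans with (K1 * l2norm t). apply HB1; auto. apply Rmult_le_compat_l; auto. }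
 assert (B2 : Cmod (S2 t k) <= K2 * sqrt eta).
 { apply Rle_trans with (l2norm (S2 t)). apply coord_le; auto.
   apply Rle_trans with (K2 * l2norm t). apply HB2; auto. apply Rmult_le_compat_l; auto. }
 assert (Hd : (S1 x k - S2 x k = S1 t k - S2 t k)%C).
 { rewrite E1, E2, (Hf N xN HxN k). ring. }
 assert (Hle : eps <= K1 * sqrt eta + K2 * sqrt eta).
 { unfold eps. rewrite Hd. unfold Cminus. eapply Rle_trans. apply Cmod_triangle. rewrite Cmod_opp. lra. }
 rewrite Hse in Hle.
 assert (eps * (K1 + K2) / (2 * (K1 + K2 + 1)) < eps).
 { apply Rmult_lt_reg_r with (2 * (K1 + K2 + 1)). lra. field_simplify; [nra|lra]. }
 assert (K1 * (eps / (2 * (K1 + K2 + 1))) + K2 * (eps / (2 * (K1 + K2 + 1))) = eps * (K1 + K2) / (2 * (K1 + K2 + 1))) by (field; lra).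
 lra.
Qed.


Lemma bernoulli r w : 0 <= r <= 1 -> 1 - r ^ w <= INR w * (1 - r).
Proof. intros Hr. induction w.
 - simpl. lra.
 - rewrite S_INR. simpl.
   assert (r ^ w <= 1) by (rewrite <- (pow1 w); apply pow_incr; lra).
   assert (0 <= r ^ w) by (apply pow_le; lra). nra. Qed.

Lemma sq_RC a z : Cmod (Cmult (RtoC a) z) ^ 2 = a ^ 2 * Cmod z ^ 2.
Proof. rewrite Cmod_mult, Cmod_R. rewrite <- (pow2_abs a). ring. Qed.

Lemma DI a : (forall k, 0 <= a k) -> ex_series a -> forall eps, 0 < eps ->
  exists delta, 0 < delta <= 1 /\ forall r, 1 - delta < r < 1 ->
    ex_series (fun k => (1 - dd r k) ^ 2 * a k) /\ Series (fun k => (1 - dd r k) ^ 2 * a k) <= eps.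
Proof.
 intros Ha Hex eps Heps.
 destruct (tail_small a Ha Hex (eps / 2) ltac:(lra)) as [N [Ht1 Ht2]].
 set (W := rsum N (fun k => INR (dweight (S k)))).
 assert (HW : forall k, (k < N)%nat -> INR (dweight (S k)) <= W).
 { intros k Hk. apply (rsum_term N (fun k => INR (dweight (S k))) k); auto. intros; apply pos_INR. }
 assert (HW0 : 0 <= W) by (apply rsum_nonneg; intros; apply pos_INR).
 set (SA := Series a). assert (HSA : 0 <= SA) by (apply Series_nonneg'; auto).
 set (delta := Rmin 1 (eps / (2 * (W + 1) ^ 2 * (SA + 1)))).
 assert (Hq : 0 < eps / (2 * (W + 1) ^ 2 * (SA + 1))).
 { apply Rdiv_lt_0_compat; auto. apply Rmult_lt_0_compat; [|lra]. apply Rmult_lt_0_compat; [lra|]. apply pow_lt; lra. }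
 assert (Hd1 : delta <= 1) by apply Rmin_l.
 assert (Hd2 : delta <= eps / (2 * (W + 1) ^ 2 * (SA + 1))) by apply Rmin_r.
 assert (Hd0 : 0 < delta) by (apply Rmin_glb_lt; lra).
 exists delta. split; [lra|]. intros r Hr.
 assert (Hr' : 0 < r < 1) by lra.
 assert (Hh : forall k, 0 <= headf N a k) by (intros k; unfold headf; destruct (k <? N)%nat; auto; lra).
 assert (Ht : forall k, 0 <= tailf N a k) by (intros k; unfold tailf; destruct (k <? N)%nat; auto; lra).
 destruct (series_cmp (headf N a) a Hh) as [Hh1 Hh2]; auto.
 { intros k; unfold headf; destruct (k <? N)%nat; auto; lra. }
 assert (Hpt : forall k, (1 - dd r k) ^ 2 * a k <= (W * (1 - r)) ^ 2 * headf N a k + 1 * tailf N a k).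
 { intros k. pose proof (dd_bounds r k Hr'). pose proof (Ha k). unfold headf, tailf.
   destruct (Nat.ltb_spec k N).
   - assert (1 - dd r k <= W * (1 - r)).
     { unfold dd. eapply Rle_trans. apply bernoulli; lra. apply Rmult_le_compat_r; [lra|]. apply HW; auto. }
     assert ((1 - dd r k) ^ 2 <= (W * (1 - r)) ^ 2) by (apply pow_incr; lra).
     assert ((1 - dd r k) ^ 2 * a k <= (W * (1 - r)) ^ 2 * a k) by (apply Rmult_le_compat_r; auto). lra.
   - assert ((1 - dd r k) ^ 2 <= 1) by nra. nra. }
 destruct (series_cmp2 (fun k => (1 - dd r k) ^ 2 * a k) (headf N a) (tailf N a) ((W * (1 - r)) ^ 2) 1) as [E1 E2]; auto.
 { intros k. apply Rmult_le_pos; auto. apply pow_le. pose proof (dd_bounds r k Hr'). lra. }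
 { apply pow_le. nra. } { lra. }
 split; auto.
 assert (Hb : (W * (1 - r)) ^ 2 * Series (headf N a) <= eps / 2).
 { apply Rle_trans with ((W * (1 - r)) ^ 2 * SA). apply Rmult_le_compat_l; auto. apply pow_le; nra.
   assert (H0 : 0 <= W * (1 - r) <= (W + 1) * delta) by (split; nra).
   assert (H1 : (W * (1 - r)) ^ 2 <= ((W + 1) * delta) ^ 2) by (apply pow_incr; lra).
   assert (H2 : ((W + 1) * delta) ^ 2 <= (W + 1) ^ 2 * delta) .
   { replace (((W + 1) * delta) ^ 2) with ((W + 1) ^ 2 * (delta * delta)) by ring.
     apply Rmult_le_compat_l; [apply pow_le; lra|nra]. }
   assert (H3 : (W + 1) ^ 2 * delta * (SA + 1) <= eps / 2).
   { apply Rle_trans with ((W + 1) ^ 2 * (eps / (2 * (W + 1) ^ 2 * (SA + 1))) * (SA + 1)).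
     apply Rmult_le_compat_r; [lra|]. apply Rmult_le_compat_l; [apply pow_le; lra|lra].
     right. field. repeat split; try (apply pow_nonzero); lra. }
   assert (0 <= (W * (1 - r)) ^ 2) by (apply pow_le; nra).
   assert (0 <= (W + 1) ^ 2) by (apply pow_le; nra).
   nra. }
 lra.
Qed.

Lemma SOT_DSD S : bdd_linear_op S -> forall x, l2 x -> forall eps, 0 < eps ->
  exists delta, 0 < delta /\ forall r, 1 - delta < r < 1 ->
    l2norm (fun j => Cminus (DSD r S x j) (S x j)) < eps.
Proof.
 intros HS x Hx eps Heps.
 destruct (bdd_pos S HS) as [K [HK HB]]. pose proof HS as [Hl [Hlin _]].
 set (eps1 := eps ^ 2 / (4 * (K ^ 2 + 1))).
 assert (He1 : 0 < eps1) by (unfold eps1; apply Rdiv_lt_0_compat; [apply pow_lt; lra| nra]).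
 destruct (DI (sq x) (sq_nonneg x) Hx eps1 He1) as [d1 [Hd1 H1]].
 destruct (DI (sq (S x)) (sq_nonneg (S x)) (Hl x Hx) eps1 He1) as [d2 [Hd2 H2]].
 exists (Rmin d1 d2). split; [apply Rmin_glb_lt; lra|]. intros r Hr.
 assert (Hr1 : 1 - d1 < r < 1) by (pose proof (Rmin_l d1 d2); lra).
 assert (Hr2 : 1 - d2 < r < 1) by (pose proof (Rmin_r d1 d2); lra).
 assert (Hr' : 0 < r < 1) by lra.
 destruct (H1 r Hr1) as [Ex1 Bx1]. destruct (H2 r Hr2) as [Ex2 Bx2].
 set (u := fun j => Cmult (RtoC (dd r j - 1)) (x j)).
 assert (Hsu : forall k, sq u k = (1 - dd r k) ^ 2 * sq x k).
 { intros k. unfold u, sq. rewrite sq_RC. ring. }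
 destruct (series_cmp (sq u) (fun k => (1 - dd r k) ^ 2 * sq x k)) as [Hul2 Hub]; auto.
 { intros k; rewrite Hsu; lra. }
 assert (HDx : Dm r x = fun j => Cplus (x j) (Cmult (RtoC 1) (u j))).
 { apply functional_extensionality. intros j. unfold Dm, u. rewrite RtoC_minus. ring. }
 assert (HSu : Series (sq (S u)) <= K ^ 2 * eps1).
 { eapply Rle_trans. apply (op_sq S K u HB HK Hul2 (Hl u Hul2)). apply Rmult_le_compat_l; [apply pow_le; auto|lra]. }
 set (e := fun j => Cminus (DSD r S x j) (S x j)).
 assert (Hpt : forall j, sq e j <= 2 * sq (S u) j + 2 * ((1 - dd r j) ^ 2 * sq (S x) j)).
 { intros j. unfold e, DSD, sq. unfold Dm at 1. rewrite HDx. cbv beta. rewrite Hlin by auto.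
   replace (RtoC (dd r j) * (S x j + RtoC 1 * S u j) - S x j)%C
     with (RtoC (dd r j) * S u j + RtoC (dd r j - 1) * S x j)%C by (rewrite RtoC_minus; ring).
   eapply Rle_trans. apply Cmod_sq_add. rewrite !sq_RC.
   pose proof (dd_bounds r j Hr'). pose proof (pow2_ge_0 (Cmod (S u j))).
   assert (dd r j ^ 2 <= 1) by nra.
   replace ((dd r j - 1) ^ 2) with ((1 - dd r j) ^ 2) by ring. nra. }
 destruct (series_cmp2 (sq e) (sq (S u)) (fun k => (1 - dd r k) ^ 2 * sq (S x) k) 2 2 (sq_nonneg e) (sq_nonneg (S u))) as [Ee Be].
 { intros k. apply Rmult_le_pos; auto. apply pow2_ge_0. }
 { lra. } { lra. } { exact Hpt. } { apply Hl; auto. } { exact Ex2. }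
 unfold l2norm. fold (sq e). fold e. apply sqrt_lt_of; auto.
 assert (2 * (K ^ 2 * eps1) + 2 * eps1 = eps ^ 2 / 2) by (unfold eps1; field; nra).
 assert (0 < eps ^ 2) by (apply pow_lt; lra).
 lra.
Qed.


Definition strict (f : nat -> nat) : Prop := forall n, (f n < f (S n))%nat.

Lemma strict_mono f : strict f -> forall a b, (a < b)%nat -> (f a < f b)%nat.
Proof. intros H a b Hab. induction Hab. apply H. specialize (H m). lia. Qed.

Lemma strict_ge f : strict f -> forall n, (n <= f n)%nat.
Proof. intros H n. induction n. lia. specialize (H n). lia. Qed.

Lemma strict_comp f g : strict f -> strict g -> strict (fun n => f (g n)).
Proof. intros Hf Hg n. apply strict_mono; auto. Qed.

Lemma cv_sub v l g : strict g -> Un_cv v l -> Un_cv (fun n => v (g n)) l.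
Proof. intros Hg H eps He. destruct (H eps He) as [N HN]. exists N. intros n Hn.
 apply HN. pose proof (strict_ge g Hg n). lia. Qed.

Lemma BWR (u : nat -> R) C : (forall n, Rabs (u n) <= C) ->
  exists g, strict g /\ exists l, Un_cv (fun n => u (g n)) l.
Proof.
 intros Hb.
 destruct (Bolzano_Weierstrass u (fun c => - C <= c <= C) (compact_P3 (- C) C)) as [l Hl].
 { intros n. specialize (Hb n). apply Rabs_le_between in Hb. exact Hb. }
 assert (Hc : forall m : nat, exists p, (m <= p)%nat /\ Rabs (u p - l) < / (INR m + 1)).
 { intros m. assert (Hp : 0 < / (INR m + 1)) by (apply Rinv_0_lt_compat; pose proof (pos_INR m); lra).
   destruct (Hl (disc l (mkposreal _ Hp)) m) as [p [Hp1 Hp2]].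
   - exists (mkposreal _ Hp). intros y Hy. exact Hy.
   - exists p. split; auto. }
 set (F := fun m => proj1_sig (constructive_indefinite_description _ (Hc m))).
 assert (HF : forall m, (m <= F m)%nat /\ Rabs (u (F m) - l) < / (INR m + 1)).
 { intros m. unfold F. destruct (constructive_indefinite_description _ (Hc m)) as [p Hp]. exact Hp. }
 set (g := nat_rec (fun _ => nat) (F 0%nat) (fun _ p => F (S p))).
 assert (HgS : forall n, g (S n) = F (S (g n))) by reflexivity.
 assert (Hgs : strict g). { intros n. rewrite HgS. destruct (HF (S (g n))). lia. }
 exists g. split; auto. exists l.
 intros eps He. destruct (archimed_cor1 eps He) as [N [HN1 HN2]]. exists N. intros n Hn.
 destruct n as [|n]; [lia|]. unfold R_dist. rewrite HgS. destruct (HF (S (g n))) as [_ H2].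
 eapply Rlt_le_trans. exact H2. eapply Rle_trans; [|apply Rlt_le; exact HN1].
 apply Rinv_le_contravar. apply lt_0_INR; lia.
 pose proof (strict_ge g Hgs n). assert (INR N <= INR (S (g n))) by (apply le_INR; lia). lra.
Qed.

Lemma EXT_R (u : nat -> nat -> R) C : (forall n k, Rabs (u n k) <= C) ->
  exists phi, strict phi /\ exists L : nat -> R, forall k, Un_cv (fun n => u (phi n) k) (L k).
Proof.
 intros Hb.
 assert (G : forall (f : nat -> nat) (k : nat), exists p : (nat -> nat) * R,
   strict (fst p) /\ Un_cv (fun n => u (f (fst p n)) k) (snd p)).
 { intros f k. destruct (BWR (fun n => u (f n) k) C) as [g [Hg [l Hl]]]. intros; apply Hb.
   exists (g, l). split; auto. }
 set (P := fun f k => proj1_sig (constructive_indefinite_description _ (G f k))).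
 assert (HP : forall f k, strict (fst (P f k)) /\ Un_cv (fun n => u (f (fst (P f k) n)) k) (snd (P f k))).
 { intros f k. unfold P. destruct (constructive_indefinite_description _ (G f k)) as [p Hp]. exact Hp. }
 set (E := nat_rec (fun _ => nat -> nat) (fun n => n) (fun k Ek => fun n => Ek (fst (P Ek k) n))).
 assert (ES : forall k n, E (S k) n = E k (fst (P (E k) k) n)) by reflexivity.
 assert (Estrict : forall k, strict (E k)).
 { induction k. intros n. simpl. lia.
   intros n. rewrite !ES. apply strict_mono; auto. apply (proj1 (HP (E k) k)). }
 assert (Etail : forall k j m, exists m', (m <= m')%nat /\ E (S k + j)%nat m = E (S k) m').
 { intros k j. induction j; intros m.
   - exists m. split; auto. rewrite Nat.add_0_r. reflexivity.
   - replace (S k + S j)%nat with (S (S k + j)) by lia. rewrite ES.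
     destruct (IHj (fst (P (E (S k + j)%nat) (S k + j)%nat) m)) as [m' [H1 H2]].
     exists m'. split; auto. pose proof (strict_ge _ (proj1 (HP (E (S k + j)%nat) (S k + j)%nat)) m). lia. }
 exists (fun n => E (S n) n). split.
 - intros n. rewrite (ES (S n) (S n)). apply strict_mono; auto.
   pose proof (strict_ge _ (proj1 (HP (E (S n)) (S n))) (S n)). lia.
 - exists (fun k => snd (P (E k) k)). intros k eps He.
   destruct (proj2 (HP (E k) k) eps He) as [N0 HN0].
   exists (Nat.max N0 k). intros n Hn.
   destruct (Etail k (n - k)%nat n) as [m' [H1 H2]].
   replace (S k + (n - k))%nat with (S n) in H2 by lia. rewrite H2. rewrite ES.
   apply HN0. lia.
Qed.


Lemma Cmod_le_parts (a : C) : Cmod a <= Rabs (fst a) + Rabs (snd a).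
Proof. unfold Cmod. rewrite <- (sqrt_pow2 (Rabs (fst a) + Rabs (snd a))) by (pose proof (Rabs_pos (fst a)); pose proof (Rabs_pos (snd a)); lra).
 apply sqrt_le_1_alt. rewrite <- (pow2_abs (fst a)), <- (pow2_abs (snd a)).
 pose proof (Rabs_pos (fst a)); pose proof (Rabs_pos (snd a)). nra. Qed.

Lemma Re_le (a : C) : Rabs (fst a) <= Cmod a.
Proof. unfold Cmod. rewrite <- (sqrt_pow2 (Rabs (fst a))) by apply Rabs_pos. apply sqrt_le_1_alt.
 rewrite pow2_abs. pose proof (pow2_ge_0 (snd a)). lra. Qed.
Lemma Im_le (a : C) : Rabs (snd a) <= Cmod a.
Proof. unfold Cmod. rewrite <- (sqrt_pow2 (Rabs (snd a))) by apply Rabs_pos. apply sqrt_le_1_alt.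
 rewrite pow2_abs. pose proof (pow2_ge_0 (fst a)). lra. Qed.

Lemma EXT_C (z : nat -> nat -> C) Cb : (forall n k, Cmod (z n k) <= Cb) ->
  exists phi, strict phi /\ exists L : nat -> C, forall k eps, 0 < eps -> exists N, forall n, (N <= n)%nat ->
    Cmod (Cminus (z (phi n) k) (L k)) < eps.
Proof.
 intros Hb.
 destruct (EXT_R (fun n k => fst (z n k)) Cb) as [p1 [Hp1 [LR HR]]].
 { intros n k. eapply Rle_trans. apply Re_le. apply Hb. }
 destruct (EXT_R (fun n k => snd (z (p1 n) k)) Cb) as [p2 [Hp2 [LI HI]]].
 { intros n k. eapply Rle_trans. apply Im_le. apply Hb. }
 exists (fun n => p1 (p2 n)). split. apply strict_comp; auto.
 exists (fun k => (LR k, LI k)). intros k eps He.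
 destruct (cv_sub _ _ p2 Hp2 (HR k) (eps/2) ltac:(lra)) as [N1 HN1].
 destruct (HI k (eps/2) ltac:(lra)) as [N2 HN2].
 exists (Nat.max N1 N2). intros n Hn. eapply Rle_lt_trans. apply Cmod_le_parts.
 specialize (HN1 n ltac:(lia)). specialize (HN2 n ltac:(lia)). unfold R_dist in *. simpl in *.
 unfold Rminus in *. lra.
Qed.

Lemma fin_unif (v : nat -> nat -> R) : (forall k eps, 0 < eps -> exists N, forall n, (N <= n)%nat -> v n k < eps) ->
  forall M eps, 0 < eps -> exists N, forall n, (N <= n)%nat -> forall k, (k < M)%nat -> v n k < eps.
Proof. intros H M eps He. induction M.
 - exists 0%nat. intros; lia.
 - destruct IHM as [N1 H1]. destruct (H M eps He) as [N2 H2]. exists (Nat.max N1 N2). intros n Hn k Hk.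
   destruct (Nat.eq_dec k M) as [->|]. apply H2; lia. apply H1; lia. Qed.

Lemma rsum_cv N (f : nat -> nat -> R) g : (forall k, Un_cv (fun n => f n k) (g k)) ->
  Un_cv (fun n => rsum N (f n)) (rsum N g).
Proof. induction N; intros H; simpl.
 - intros eps He. exists 0%nat. intros. unfold R_dist. rewrite Rminus_0_r, Rabs_R0. lra.
 - apply CV_plus; auto. Qed.

Lemma lim_le v l A : Un_cv v l -> (forall n, v n <= A) -> l <= A.
Proof. intros H HA. destruct (Rle_or_lt l A); auto. destruct (H (l - A)) as [N HN]. lra.
 specialize (HN N (le_n N)). specialize (HA N). unfold R_dist in HN. apply Rabs_def2 in HN. lra. Qed.

Lemma rsum_const N c : rsum N (fun _ => c) = INR N * c.
Proof. induction N; simpl rsum. simpl. ring. rewrite IHN, S_INR. ring. Qed.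

Lemma CMP (z : nat -> nat -> C) (d : nat -> R) A : 0 <= A ->
  (forall n N, rsum N (sq (z n)) <= A) ->
  (forall k, 0 <= d k <= 1) ->
  (forall eta, 0 < eta -> exists M, forall k, (M <= k)%nat -> d k ^ 2 <= eta) ->
  exists phi : nat -> nat, (forall k, (phi k < phi (S k))%nat) /\
    exists y, l2 y /\ forall eps, 0 < eps -> exists N, forall n, (N <= n)%nat ->
      l2norm (fun j => Cminus (Cmult (RtoC (d j)) (z (phi n) j)) (y j)) < eps.
Proof.
 intros HA Hz Hd Hdec.
 assert (Hcb : forall n k, Cmod (z n k) <= sqrt A).
 { intros n k. apply le_sqrt_of_sq. apply Cmod_ge_0. eapply Rle_trans; [|apply (Hz n (S k))].
   apply (rsum_term (S k) (sq (z n)) k); auto. }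
 destruct (EXT_C z (sqrt A) Hcb) as [phi [Hphi [L HL]]].
 exists phi. split; [exact Hphi|].
 assert (HcvC : forall k, Un_cv (fun n => sq (z (phi n)) k) (sq L k)).
 { intros k. unfold sq.
   assert (Hc : Un_cv (fun n => Cmod (z (phi n) k)) (Cmod (L k))).
   { intros eps He. destruct (HL k eps He) as [N HN]. exists N. intros n Hn. unfold R_dist.
     specialize (HN n ltac:(lia)).
     pose proof (Cmod_triangle (z (phi n) k - L k) (L k)). pose proof (Cmod_triangle (L k - z (phi n) k) (z (phi n) k)).
     replace (z (phi n) k - L k + L k)%C with (z (phi n) k) in H by ring.
     replace (L k - z (phi n) k + z (phi n) k)%C with (L k) in H0 by ring.
     replace (L k - z (phi n) k)%C with (- (z (phi n) k - L k))%C in H0 by ring. rewrite Cmod_opp in H0.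
     apply Rabs_def1; lra. }
   assert (H1 : Un_cv (fun _ => 1) 1).
   { intros eps He. exists 0%nat. intros. unfold R_dist. rewrite Rminus_diag_eq, Rabs_R0; [exact He|reflexivity]. }
   pose proof (CV_mult _ _ _ _ Hc (CV_mult _ _ _ _ Hc H1)) as H.
   simpl. exact H. }
 assert (HLb : forall N, rsum N (sq L) <= A).
 { intros N. apply (lim_le (fun n => rsum N (sq (z (phi n)))) _ A). apply rsum_cv. exact HcvC. intros; apply Hz. }
 set (y := fun k => Cmult (RtoC (d k)) (L k)).
 assert (Hsy : forall k, sq y k <= sq L k).
 { intros k. unfold y, sq. rewrite sq_RC. pose proof (Hd k). pose proof (pow2_ge_0 (Cmod (L k))).
   assert (d k ^ 2 <= 1) by nra. nra. }
 destruct (PS2 (sq L) A (sq_nonneg L) HLb) as [HL2 _].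
 exists y. split.
 { destruct (series_cmp (sq y) (sq L) (sq_nonneg y) Hsy HL2). auto. }
 intros eps He.
 assert (He2 : 0 < eps ^ 2) by (apply pow_lt; lra).
 set (eta1 := eps ^ 2 / (16 * (A + 1))).
 assert (Hе1 : 0 < eta1) by (unfold eta1; apply Rdiv_lt_0_compat; lra).
 destruct (Hdec eta1 Hе1) as [M HM].
 set (eta2 := eps ^ 2 / (4 * (INR M + 1))).
 assert (He2' : 0 < eta2) by (unfold eta2; apply Rdiv_lt_0_compat; [lra| pose proof (pos_INR M); lra]).
 destruct (fin_unif (fun n k => Cmod (Cminus (z (phi n) k) (L k))) HL M (sqrt eta2) ltac:(apply sqrt_lt_R0; lra)) as [N HN].
 exists N. intros n Hn.
 set (w := fun j => Cminus (Cmult (RtoC (d j)) (z (phi n) j)) (y j)).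
 assert (Hpt : forall k, sq w k <= headf M (fun _ => eta2) k + 2 * eta1 * (sq (z (phi n)) k + sq L k)).
 { intros k. unfold sq at 1. unfold w, y. replace (RtoC (d k) * z (phi n) k - RtoC (d k) * L k)%C with (RtoC (d k) * (z (phi n) k - L k))%C by ring.
   rewrite sq_RC. pose proof (Hd k). unfold headf.
   pose proof (pow2_ge_0 (Cmod (z (phi n) k - L k))).
   assert (0 <= sq (z (phi n)) k + sq L k) by (pose proof (sq_nonneg (z (phi n)) k); pose proof (sq_nonneg L k); lra).
   destruct (Nat.ltb_spec k M).
   - specialize (HN n Hn k H2). simpl in HN.
     assert (Cmod (z (phi n) k - L k) ^ 2 < eta2).
     { pose proof (sqrt_pos eta2). pose proof (pow2_sqrt eta2 ltac:(lra)). pose proof (Cmod_ge_0 (z (phi n) k - L k)). nra. }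
     assert (d k ^ 2 <= 1) by nra.
     assert (0 <= eta1) by lra. nra.
   - specialize (HM k H2).
     assert (Cmod (z (phi n) k - L k) ^ 2 <= 2 * sq (z (phi n)) k + 2 * sq L k).
     { unfold sq, Cminus. rewrite <- (Cmod_opp (L k)). apply Cmod_sq_add. }
     assert (0 <= d k ^ 2) by apply pow2_ge_0.
     nra. }
 assert (Hw : forall k, 0 <= headf M (fun _ => eta2) k + 2 * eta1 * (sq (z (phi n)) k + sq L k)).
 { intros k. pose proof (sq_nonneg w k). pose proof (Hpt k). lra. }
 destruct (PS2 (sq w) (INR M * eta2 + 2 * eta1 * (A + A)) (sq_nonneg w)) as [_ Hsw].
 { intros K. eapply Rle_trans. apply rsum_le. intros k _. apply Hpt.
   rewrite rsum_plus, rsum_scal, rsum_plus. unfold headf. rewrite rsum_trunc, rsum_const.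
   assert (INR (Nat.min K M) <= INR M) by (apply le_INR; lia).
   pose proof (Hz (phi n) K). pose proof (HLb K).
   assert (0 <= eta1) by lra.
   assert (INR (Nat.min K M) * eta2 <= INR M * eta2) by (apply Rmult_le_compat_r; lra).
   assert (2 * eta1 * (rsum K (sq (z (phi n))) + rsum K (sq L)) <= 2 * eta1 * (A + A)) by (apply Rmult_le_compat_l; lra).
   lra. }
 unfold l2norm. fold (sq w). apply sqrt_lt_of; auto.
 assert (INR M * eta2 < eps ^ 2 / 4).
 { unfold eta2. pose proof (pos_INR M). apply Rmult_lt_reg_r with (4 * (INR M + 1)). lra. field_simplify; nra. }
 assert (2 * eta1 * (A + A) < eps ^ 2 / 2).
 { unfold eta1. apply Rmult_lt_reg_r with (16 * (A + 1)). lra. field_simplify; nra. }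
 lra.
Qed.


Lemma dd_decay r : 0 < r < 1 -> forall eta, 0 < eta -> exists M, forall k, (M <= k)%nat -> dd r k ^ 2 <= eta.
Proof.
 intros Hr eta He.
 assert (Hr2 : Rabs (r ^ 2) < 1) by (rewrite Rabs_pos_eq by (apply pow_le; lra); nra).
 destruct (pow_lt_1_zero (r ^ 2) Hr2 eta He) as [N0 HN0].
 destruct (NT.dweight_big' N0) as [M HM]. exists M. intros k Hk.
 specialize (HM (S k) ltac:(lia)).
 unfold dd. rewrite <- pow_mult. rewrite Nat.mul_comm, pow_mult.
 specialize (HN0 (dweight (S k)) ltac:(lia)).
 eapply Rle_trans; [apply Rle_abs|]. lra.
Qed.

Lemma sq_le_of_norm x B : l2 x -> l2norm x <= B -> Series (sq x) <= B ^ 2.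
Proof. intros Hx HB. pose proof (l2_Series_nonneg x Hx). unfold l2norm in HB. fold (sq x) in HB.
 rewrite <- (pow2_sqrt (Series (sq x))) by auto. apply pow_incr. split; auto. apply sqrt_pos. Qed.

Lemma compact_DSD S r : bdd_linear_op S -> 0 < r < 1 -> compact_op (DSD r S).
Proof.
 intros HS Hr xs Hxs [B HB].
 destruct (bdd_pos S HS) as [K [HK HKb]]. pose proof HS as [Hl _].
 destruct (CMP (fun n => S (Dm r (xs n))) (dd r) (K ^ 2 * B ^ 2)) as [phi [Hphi [y [Hy Hc]]]].
 - apply Rmult_le_pos; apply pow2_ge_0.
 - intros n N. destruct (Dm_l2 r (xs n) Hr (Hxs n)) as [HD1 HD2].
   eapply Rle_trans. apply PS1; auto. apply Hl; auto.
   eapply Rle_trans. apply (op_sq S K); auto.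
   apply Rmult_le_compat_l. apply pow2_ge_0.
   eapply Rle_trans. exact HD2. apply sq_le_of_norm; auto.
 - intros k; apply dd_bounds; auto.
 - apply dd_decay; auto.
 - exists phi. split; auto. exists y. split; auto.
Qed.

Lemma K_nonneg S K : op_bounded_by S K -> 0 <= K.
Proof.
 intros H. destruct (Rle_or_lt 0 K) as [|HK]; auto. exfalso.
 assert (Hx : l2 (ek 0)) by (apply (finsupp_l2 1); apply finsupp_ek; lia).
 specialize (H (ek 0) Hx).
 assert (Hp : 0 < l2norm (ek 0)).
 { unfold l2norm. apply sqrt_lt_R0. fold (sq (ek 0)).
   eapply Rlt_le_trans; [|apply (PS1 (sq (ek 0)) 1); auto].
   simpl. unfold sq, ek. simpl. rewrite Cmod_1. lra. }
 assert (0 <= l2norm (S (ek 0))) by apply sqrt_pos. nra.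
Qed.

Lemma compact_ext S1 S2 : compact_op S1 -> (forall x, l2 x -> S2 x = S1 x) -> compact_op S2.
Proof. intros H E xs Hxs HB. destruct (H xs Hxs HB) as [phi [Hphi [y [Hy Hc]]]].
 exists phi. split; auto. exists y. split; auto. intros eps He. destruct (Hc eps He) as [N HN].
 exists N. intros k Hk. rewrite E by auto. apply HN; auto. Qed.

Lemma bound_ext S1 S2 K : op_bounded_by S1 K -> (forall x, l2 x -> S2 x = S1 x) -> op_bounded_by S2 K.
Proof. intros H E x Hx. rewrite E by auto. apply H; auto. Qed.

Theorem lemma4 (alpha : nat -> C) (T Tadj : Op) :
  extends_M alpha T -> is_adjoint T Tadj ->
  (forall r, 0 < r < 1 -> exists Tr, extends_M (Dr r alpha) Tr) /\
  (forall r (Tr : Op), 0 < r < 1 -> extends_M (Dr r alpha) Tr ->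
     compact_op Tr /\ (forall K, op_bounded_by T K -> op_bounded_by Tr K)) /\
  (forall Tr Tradj : R -> Op,
     (forall r, 0 < r < 1 ->
        extends_M (Dr r alpha) (Tr r) /\ is_adjoint (Tr r) (Tradj r)) ->
     SOT_conv_left1 Tr T /\ SOT_conv_left1 Tradj Tadj).
Proof.
 intros [HTb HTf] [HAb HAf].
 assert (F1 : forall r, 0 < r < 1 -> extends_M (Dr r alpha) (DSD r T)).
 { intros r Hr. split. apply DSD_bdd; auto.
   intros N a b Ha Hb. rewrite DSD_finip, HTf by (apply finsupp_Dm; auto). symmetry. apply Mform_D. }
 assert (F2 : forall r Tr, 0 < r < 1 -> extends_M (Dr r alpha) Tr -> forall x, l2 x -> Tr x = DSD r T x).
 { intros r Tr Hr [HTrb HTrf] x Hx. apply functional_extensionality. intros k.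
   apply ext_l2; auto. apply DSD_bdd; auto.
   apply uniq1. intros N a b Ha Hb. rewrite HTrf by auto. symmetry. apply (proj2 (F1 r Hr)); auto. }
 assert (F3 : forall r Tr Tra, 0 < r < 1 -> extends_M (Dr r alpha) Tr -> is_adjoint Tr Tra ->
            forall x, l2 x -> Tra x = DSD r Tadj x).
 { intros r Tr Tra Hr HTr [HTrab HTraf] x Hx. apply functional_extensionality. intros k.
   apply ext_l2; auto. apply DSD_bdd; auto.
   apply uniq2. intros N a b Ha Hb. rewrite HTraf by auto.
   rewrite (F2 r Tr Hr HTr a (finsupp_l2 N a Ha)).
   rewrite DSD_finip. rewrite <- HAf by (apply finsupp_Dm; auto).
   unfold DSD. apply finip_D. }
 split; [|split].
 - intros r Hr. exists (DSD r T). apply F1; auto.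
 - intros r Tr Hr HTr. split.
   + apply (compact_ext (DSD r T)). apply compact_DSD; auto. intros x Hx. apply (F2 r Tr Hr HTr x Hx).
   + intros K HK. apply (bound_ext (DSD r T)). apply DSD_bound; auto. apply (K_nonneg T K HK).
     intros x Hx. apply (F2 r Tr Hr HTr x Hx).
 - intros Tr Tra H. split.
   + intros x Hx eps He. destruct (SOT_DSD T HTb x Hx eps He) as [d [Hd Hs]].
     exists (Rmin d 1). split. apply Rmin_glb_lt; lra. intros r Hr.
     assert (Hr1 : 0 < r < 1) by (pose proof (Rmin_r d 1); lra).
     rewrite (F2 r (Tr r) Hr1 (proj1 (H r Hr1)) x Hx). apply Hs. pose proof (Rmin_l d 1). lra.
   + intros x Hx eps He. destruct (SOT_DSD Tadj HAb x Hx eps He) as [d [Hd Hs]].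
     exists (Rmin d 1). split. apply Rmin_glb_lt; lra. intros r Hr.
     assert (Hr1 : 0 < r < 1) by (pose proof (Rmin_r d 1); lra).
     rewrite (F3 r (Tr r) (Tra r) Hr1 (proj1 (H r Hr1)) (proj2 (H r Hr1)) x Hx). apply Hs. pose proof (Rmin_l d 1). lra.
Qed.
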